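(* Let $\mathcal{C}$ be a binary linear $[n,k,d]$ code, let $d^{\perp}$ denote the minimum distance of the dual code $\mathcal{C}^{\perp}$, and for $\sigma=1,\ldots,d-1$ put $$\omega_{\sigma}=\max\left\{\left\lceil \frac{n+1}{\sigma}\right\rceil-1,\; d^{\perp}\right\}.$$ Then for every $\ell$ with $1\le \ell\le d$, $$\rho_{\ell}(\mathcal{C})\;\ge\;\max\left(n-k,\;\max_{\sigma\in\{1,\ldots,\ell-1\}}\frac{\binom{n}{\sigma}}{\omega_{\sigma}\binom{n-\omega_{\sigma}}{\sigma-1}}\right).$$
   Context: Let $\mathbf{H}$ be a binary matrix with $n$ columns indexed by $J=\{0,\ldots,n-1\}$. For a nonempty $I\subseteq J$, a row of $\mathbf{H}$ is said to resolve $I$ if its restriction to the columns in $I$ has Hamming weight exactly one. A nonempty set $I\subseteq J$ is a stopping set of $\mathbf{H}$ if no row of $\mathbf{H}$ resolves $I$. The stopping distance of $\mathbf{H}$ is the minimum size of a stopping set of $\mathbf{H}$. A (possibly redundant) parity-check matrix of a binary linear code $\mathcal{C}$ of length $n$ is a binary matrix with $n$ columns whose row space equals $\mathcal{C}^{\perp}$. For $\ell\le d$, the $\ell$-th stopping redundancy $\rho_{\ell}(\mathcal{C})$ is the smallest number of rows of a (possibly redundant) parity-check matrix of $\mathcal{C}$ with stopping distance at least $\ell$. *)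

(* Defs.v *)
From HB Require Import structures.
From mathcomp Require Import all_boot all_order all_algebra.
Set Implicit Arguments. Unset Strict Implicit. Unset Printing Implicit Defensive.
Import Order.TTheory GRing.Theory Num.Theory.

Definition wt (n : nat) (v : 'rV['F_2]_n) : nat := #|[set j : 'I_n | v ord0 j != 0%R]|.

(* Minimum weight of a nonzero vector satisfying P (default n if there is none). *)
Definition min_dist (n : nat) (P : pred 'rV['F_2]_n) : nat :=
  \big[minn/n]_(v : 'rV['F_2]_n | P v && (v != 0%R)) wt v.

(* The code C with generator matrix G is its row space; C^perp is kermx G^T. *)
Definition in_code (k n : nat) (G : 'M['F_2]_(k, n)) : pred 'rV['F_2]_n :=
  fun v => (v <= G)%MS.
Definition in_dual (k n : nat) (G : 'M['F_2]_(k, n)) : pred 'rV['F_2]_n :=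
  fun v => (v <= kermx G^T)%MS.

(* (possibly redundant) parity-check matrix: row space equals C^perp *)
Definition is_parity_check (k n r : nat) (G : 'M['F_2]_(k, n)) (H : 'M['F_2]_(r, n)) : bool :=
  (H == kermx G^T)%MS.

Definition resolves (r n : nat) (H : 'M['F_2]_(r, n)) (i : 'I_r) (I : {set 'I_n}) : bool :=
  #|[set j in I | H i j != 0%R]| == 1.

Definition stopping_set (r n : nat) (H : 'M['F_2]_(r, n)) (I : {set 'I_n}) : bool :=
  (I != set0) && [forall i : 'I_r, ~~ resolves H i I].

Definition stopping_distance_ge (r n : nat) (H : 'M['F_2]_(r, n)) (l : nat) : Prop :=
  forall I : {set 'I_n}, stopping_set H I -> l <= #|I|.

Definition omega (n dperp s : nat) : nat :=
  maxn ((n.+1 + s - 1) %/ s - 1) dperp.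

Local Open Scope ring_scope.
Definition sigma_bound (n dperp s : nat) : rat :=
  ('C(n, s))%:R / ((omega n dperp s)%:R * ('C(n - omega n dperp s, s - 1))%:R).

(* Main.v *)
Set Warnings "-all".
Require Import Defs.
From HB Require Import structures.
From mathcomp Require Import all_boot all_order all_algebra.
From Stdlib Require Import Lia.
Import Order.TTheory GRing.Theory Num.Theory.
Set Implicit Arguments. Unset Strict Implicit. Unset Printing Implicit Defensive.

Definition fw (n t w : nat) := w * 'C(n - w, t).

Lemma step_down n s w : (0 < s)%N -> (w < n)%N -> (n.+1 <= s * w.+1)%N ->
  (fw n s.-1 w.+1 <= fw n s.-1 w)%N.
Proof.
move=> s0 wn h; rewrite /fw.
have a0 : (0 < n - w)%N by rewrite subn_gt0.
rewrite -(leq_pmul2l a0) mulnCA.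
have -> : (n - w.+1 = (n - w).-1)%N by rewrite subnS.
rewrite mul_bin_down mulnCA mulnA [X in (_ <= X)%N]mulnA.
apply: leq_mul => //.
apply/ssrnat.leP; move/ssrnat.leP: h; move/ssrnat.leP: a0; move/ssrnat.leP: s0; move/ssrnat.leP: wn.
rewrite -?plusE -?multE -?minusE.
case: s => [|s] /=; first lia.
move=> *. nia.
Qed.

Lemma step_up n s w : (0 < s)%N -> (s * w.+1 <= n)%N ->
  (fw n s.-1 w <= fw n s.-1 w.+1)%N.
Proof.
move=> s0 h; rewrite /fw.
have wn : (w < n)%N.
  by apply: leq_trans h; rewrite -{1}(mul1n w.+1) leq_mul2r s0 orbT.
have a0 : (0 < n - w)%N by rewrite subn_gt0.
rewrite -(leq_pmul2l a0) [X in (_ <= X)%N]mulnCA.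
have -> : (n - w.+1 = (n - w).-1)%N by rewrite subnS.
rewrite mul_bin_down mulnCA mulnA [X in (_ <= X)%N]mulnA.
apply: leq_mul => //.
apply/ssrnat.leP; move/ssrnat.leP: h; move/ssrnat.leP: a0; move/ssrnat.leP: s0; move/ssrnat.leP: wn.
rewrite -?plusE -?multE -?minusE.
case: s => [|s] /=; first lia.
move=> *. nia.
Qed.

Lemma fw_max n s dp w : (0 < s)%N -> (dp <= w)%N -> (w <= n)%N -> (dp <= n)%N ->
  (fw n s.-1 w <= fw n s.-1 (maxn ((n.+1 + s - 1) %/ s - 1) dp))%N.
Proof.
move=> s0 dw wn dn.
set q := ((n.+1 + s - 1) %/ s)%N.
have hq := divn_eq (n.+1 + s - 1) s.
have hr := ltn_pmod (n.+1 + s - 1) s0.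
rewrite -/q in hq.
set rr := ((n.+1 + s - 1) %% s)%N in hq hr.
have q1 : (s * q <= n + s)%N.
  apply/ssrnat.leP; move/ssrnat.leP: hr; move: hq; rewrite -?plusE -?multE -?minusE => hq hr; nia.
have q2 : (n.+1 <= s * q)%N.
  apply/ssrnat.leP; move/ssrnat.leP: hr; move: hq; rewrite -?plusE -?multE -?minusE => hq hr; nia.
set m := (q - 1)%N.
have mn : (m <= n)%N.
  apply/ssrnat.leP; move/ssrnat.leP: q1; move/ssrnat.leP: s0; rewrite /m -?plusE -?multE -?minusE => *; nia.
have incr : forall j w0, (w0 + j <= m)%N -> (fw n s.-1 w0 <= fw n s.-1 (w0 + j))%N.
  elim=> [|j IH] w0 h; first by rewrite addn0.
  have h3 : (w0 + j <= m)%N by apply: leq_trans h; rewrite leq_add2l.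
  apply: leq_trans (IH w0 h3) _.
  rewrite addnS; apply: step_up => //.
  apply: leq_trans (_ : s * (q - 1) <= n)%N.
    by rewrite leq_mul2l -addnS h orbT.
  apply/ssrnat.leP; move/ssrnat.leP: q1; move/ssrnat.leP: s0; rewrite -?plusE -?multE -?minusE => *; nia.
have decr : forall j w0, (m <= w0)%N -> (w0 + j <= n)%N -> (fw n s.-1 (w0 + j) <= fw n s.-1 w0)%N.
  elim=> [|j IH] w0 h1 h2; first by rewrite addn0.
  have h3 : (w0 + j <= n)%N by apply: leq_trans h2; rewrite leq_add2l.
  apply: leq_trans (IH w0 h1 h3).
  rewrite addnS; apply: step_down => //; first by rewrite -addnS.
  apply: leq_trans q2 _; rewrite leq_mul2l; apply/orP; right.
  apply/ssrnat.leP; move/ssrnat.leP: h1; rewrite /m -?plusE -?multE -?minusE => *; lia.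
case: (leqP dp m) => hdm.
  case: (leqP w m) => hwm.
    by have := incr (m - w)%N w; rewrite subnKC // => ->.
  by have := decr (w - m)%N m (leqnn _); rewrite subnKC ?(ltnW hwm) // => ->.

by have := decr (w - dp)%N dp (ltnW hdm); rewrite subnKC // => ->.
Qed.

Lemma bigmin_le (T : finType) (P : pred T) (F : T -> nat) x0 j :
  P j -> (\big[minn/x0]_(i | P i) F i <= F j)%N.
Proof.
move=> Pj; rewrite -big_filter.
have : j \in [seq i <- index_enum T | P i] by rewrite mem_filter Pj mem_index_enum.
elim: [seq i <- _ | _] => //= a s IH; rewrite inE big_cons => /orP[/eqP->|/IH h].
  exact: geq_minl.
exact: leq_trans (geq_minr _ _) h.
Qed.

Lemma card_bigcup_seq (I : eqType) (T : finType) (s : seq I) (R : I -> {set T}) :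
  (#|\bigcup_(i <- s) R i| <= \sum_(i <- s) #|R i|)%N.
Proof.
elim: s => [|a s IH]; first by rewrite !big_nil cards0.
rewrite !big_cons; apply: leq_trans (leq_card_setU _ _) _.
by rewrite leq_add2l.
Qed.

Lemma card_resolved (r n s : nat) (H : 'M['F_2]_(r, n)) (i : 'I_r) :
  (0 < s)%N ->
  (#|[set I : {set 'I_n} | (#|I| == s) && resolves H i I]|
     <= #|[set j | H i j != 0%R]| * 'C(n - #|[set j | H i j != 0%R]|, s.-1))%N.
Proof.
move=> s0.
set S := [set j | H i j != 0%R].
set D := setX S [set A : {set 'I_n} | A \subset ~: S & #|A| == s.-1].
have cD : #|D| = (#|S| * 'C(n - #|S|, s.-1))%N.
  rewrite /D cardsX; congr (_ * _)%N.
  by rewrite cards_draws cardsCs setCK card_ord.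
rewrite -cD; apply: leq_trans (leq_imset_card (fun p => p.1 |: p.2) D).
apply/subset_leq_card/subsetP => I; rewrite inE => /andP[/eqP cI].
rewrite /resolves => /cards1P[j0 hj0].
have j0I : j0 \in [set j in I | H i j != 0%R] by rewrite hj0 set11.
move: (j0I); rewrite inE => /andP[j0in j0S].
apply/imsetP; exists (j0, I :\ j0); last by rewrite /= setD1K.
rewrite inE /= inE j0S /= inE; apply/andP; split.
  apply/subsetP => x; rewrite !inE => /andP[xj xI]; apply/negP => hx.
  have : x \in [set j in I | H i j != 0%R] by rewrite inE xI.
  by rewrite hj0 inE (negbTE xj).
by move: cI; rewrite (cardsD1 j0 I) j0in add1n => <-.
Qed.
Unset Implicit Arguments.

Theorem theorem2 (n k : nat) (G : 'M['F_2]_(k, n)) :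
  (0 < k)%N -> row_free G ->
  let d := min_dist (in_code G) in
  let dperp := min_dist (in_dual G) in
  forall l : nat, (1 <= l <= d)%N ->
  forall (r : nat) (H : 'M['F_2]_(r, n)),
    is_parity_check G H -> stopping_distance_ge H l ->
    (Num.max ((n - k)%:R : rat)
       (\big[Num.max/0%R]_(1 <= s < l) sigma_bound n dperp s) <= r%:R)%R.
Proof.
move=> k0 rfG d dperp l hl r H Hp Hs.
have HK : (H <= kermx G^T)%MS by move/andP: Hp => [].
rewrite ge_max; apply/andP; split.
  rewrite ler_nat; apply: leq_trans (rank_leq_row H).
  rewrite (eqmx_rank Hp) mxrank_ker mxrank_tr.
  by move/eqP: rfG => ->.
rewrite big_nat_cond; apply: (big_ind (fun x => x <= r%:R)%R).
- by rewrite ler0n.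
- by move=> x y hx hy; rewrite ge_max hx hy.
move=> s; rewrite andbT => /andP[s1 sl].
have s0 : (0 < s)%N by [].
set w0 := omega n dperp s.
set D := (w0 * 'C(n - w0, s - 1))%N.
have -> : sigma_bound n dperp s = (('C(n, s))%:R / (D%:R) :> rat)%R.
  by rewrite /sigma_bound natrM.
have [D0|Dpos] := posnP D.
  by rewrite D0 GRing.invr0 GRing.mulr0 ler0n.
rewrite ler_pdivrMr ?ltr0n // -natrM ler_nat.
pose R i := [set I : {set 'I_n} | (#|I| == s) && resolves H i I].
have dpn : (dperp <= n)%N.
  rewrite /dperp /min_dist; apply: (big_ind (fun x => x <= n)%N) => //.
    by move=> x y hx _; rewrite geq_min hx.
  by move=> v _; rewrite /wt -[X in (_ <= X)%N]card_ord max_card.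
have bndR : forall i, (#|R i| <= D)%N.
  move=> i; apply: leq_trans (card_resolved H i s0) _.
  set S := [set j | H i j != 0%R].
  have [S0|Spos] := posnP #|S|; first by rewrite S0.
  have Sn : (#|S| <= n)%N by rewrite -[X in (_ <= X)%N]card_ord max_card.
  have dS : (dperp <= #|S|)%N.
    have -> : #|S| = wt (row i H).
      by rewrite /wt; apply: eq_card => j; rewrite !inE mxE.
    rewrite /dperp /min_dist; apply: bigmin_le; apply/andP; split.
      exact: submx_trans (row_sub i H) HK.
    apply/eqP => /rowP h.
    have [j jS] : exists j, j \in S by apply/set0Pn; rewrite -card_gt0.
    by move: jS; rewrite inE; move: (h j); rewrite !mxE => ->; rewrite eqxx.
  by have := fw_max s0 dS Sn dpn; rewrite /fw /D /w0 /omega !subn1.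
have cov : ([set I : {set 'I_n} | #|I| == s] \subset \bigcup_(i <- index_enum 'I_r) R i).
  apply/subsetP => I; rewrite inE => /eqP cI.
  have : ~~ stopping_set H I.
    apply/negP => /Hs; rewrite cI => h.
    by move: sl; rewrite ltnNge h.
  rewrite /stopping_set negb_and negbK.
  have -> : (I == set0) = false by apply/negbTE; rewrite -card_gt0 cI.
  move=> /= /forallPn [i]; rewrite negbK => ri.
  rewrite big_seq; apply/bigcupP; exists i; first by rewrite mem_index_enum.
  by rewrite inE cI eqxx ri.
apply: leq_trans (_ : #|[set I : {set 'I_n} | #|I| == s]| <= _)%N.
  by rewrite card_draws card_ord.
apply: leq_trans (subset_leq_card cov) _.
apply: leq_trans (card_bigcup_seq _ _) _.
apply: leq_trans (_ : \sum_(i <- index_enum 'I_r) D <= _)%N.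
  by apply: leq_sum => i _; exact: bndR.
by rewrite sum_nat_const card_ord.
Qed.
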